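(* For a plane binary tree $t$ with $k$ nodes, let $S_t(z)$ be the exponential generating function of plane increasing binary trees having no fringe subtree of shape $t$, and let $\tilde\rho$ be its dominant singularity. Then for every $\delta>0$ the following holds: if $k$ is sufficiently large, then $S_t(z)$ has no singularity in the domain \[ \tilde\rho < |z| < 1 + \frac{(2-\delta)\ln k}{k}. \]
   Context: A plane binary tree is a rooted tree in which each node has a left and a right slot, each empty or holding a subtree. A plane increasing binary tree of size $n$ is such a tree whose $n$ nodes are labeled $1,\dots,n$ increasingly along every path from the root. A fringe subtree is a node with all its descendants; its shape is obtained by forgetting labels. For $t$ with $k$ nodes, $w(t)=\ell(t)/k!$ where $\ell(t)$ is the number of increasing labelings of $t$. $S_t$ is the power series solution of $S_t'=(1+S_t)^2-w(t)kz^{k-1}$, $S_t(0)=0$; one has $S_t=-u'/u$ with $u$ the entire solution of $u''-2u'+(1-w(t)kz^{k-1})u=0$, $u(0)=-1$, $u'(0)=0$, and $\tilde\rho>1$ is the smallest positive zero of $u$. *)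

(* Defs.v *)
From mathcomp Require Import all_boot.

Set Implicit Arguments.
Unset Strict Implicit.
Unset Printing Implicit Defensive.

Inductive btree : Type := Leaf | Node of btree & btree.

Fixpoint bsize (t : btree) : nat :=
  match t with Leaf => 0 | Node l r => (bsize l + bsize r).+1 end.

(* Nodes of t are numbered 0..bsize t - 1 in preorder, starting at offset o.
   parent_edges o t lists the (parent, child) pairs of node numbers. *)
Fixpoint parent_edges (o : nat) (t : btree) : seq (nat * nat) :=
  match t with
  | Leaf => [::]
  | Node l r =>
      let lo := o.+1 in
      let ro := o.+1 + bsize l in
      (if l is Node _ _ then [:: (o, lo)] else [::]) ++
      (if r is Node _ _ then [:: (o, ro)] else [::]) ++
      parent_edges lo l ++ parent_edges ro r
  end.

(* An increasing labeling of t: a bijection f from the nodes {0..k-1} (preorder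
   numbering) to the labels {0..k-1} (i.e. labels 1..k shifted by one) such that
   labels increase along every parent->child edge, hence along every path from
   the root. *)
Definition increasing_labeling (t : btree) (f : {ffun 'I_(bsize t) -> 'I_(bsize t)}) : bool :=
  injectiveb f &&
  [forall i : 'I_(bsize t), forall j : 'I_(bsize t),
     (((i : nat), (j : nat)) \in parent_edges 0 t) ==> (f i < f j)].

Definition nlabelings (t : btree) : nat :=
  #|[pred f : {ffun 'I_(bsize t) -> 'I_(bsize t)} | increasing_labeling f]|.

(* Main.v *)
Require Import Defs.
From Stdlib Require Import Reals Factorial.
From Coquelicot Require Import Coquelicot.

Module Comb.
From mathcomp Require Import all_boot zify.
Set Implicit Arguments. Unset Strict Implicit. Unset Printing Implicit Defensive.
Open Scope nat_scope.

Lemma edges_range t o i j : (i, j) \in parent_edges o t -> o <= i < o + bsize t /\ o <= j < o + bsize t.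
Proof.
  elim: t o => [|l IHl r IHr] o //=.
  rewrite !mem_cat => /orP [H|/orP [H|/orP [H|H]]].
  - case: l IHl H => [|l1 l2] _ //=; rewrite inE => /eqP [-> ->] /=; lia.
  - case: r IHr H => [|r1 r2] _ //=; rewrite inE => /eqP [-> ->] /=; lia.
  - have := IHl _ H. lia.
  - have := IHr _ H. lia.
Qed.

Lemma bsize_pos t : 0 < bsize t -> exists l r, t = Node l r.
Proof. case: t => [|l r] //= _. by exists l, r. Qed.

Lemma desc_min (F : nat -> nat) t o :
  (forall i j, (i, j) \in parent_edges o t -> F i < F j) ->
  forall j, o < j < o + bsize t -> F o < F j.
Proof.
  elim: t o => [|l IHl r IHr] o //= HE j Hj; first lia.
  have El : forall i j, (i, j) \in parent_edges o.+1 l -> F i < F j.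
  { move=> i j' H. apply: HE. by rewrite !mem_cat H !orbT. }
  have Er : forall i j, (i, j) \in parent_edges (o.+1 + bsize l) r -> F i < F j.
  { move=> i j' H. apply: HE. by rewrite !mem_cat H !orbT. }
  case: (leqP j (o + bsize l)) => Hjl.
  - have [l1 [l2 El']] : exists l1 l2, l = Node l1 l2 by apply: bsize_pos; lia.
    have H0 : F o < F o.+1.
    { apply: HE. by rewrite El' /= ?mem_cat ?in_cons eqxx. }
    case: (eqVneq j o.+1) => [->|Hne] //.
    apply: ltn_trans H0 _. apply: IHl => //. lia.
  - have [r1 [r2 Er']] : exists r1 r2, r = Node r1 r2 by apply: bsize_pos; lia.
    have H0 : F o < F (o.+1 + bsize l).
    { apply: HE. by rewrite Er' /= ?mem_cat ?in_cons eqxx ?orbT. }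
    case: (eqVneq j (o.+1 + bsize l)) => [->|Hne] //.
    apply: ltn_trans H0 _. apply: IHr => //. lia.
Qed.
Lemma m2 s x y i : x < s -> y < s -> (x + i) %% s = (y + i) %% s -> x = y.
Proof.
  move=> Hx Hy /eqP H. move: H. rewrite eqn_modDr !modn_small // => /eqP //.
Qed.
Lemma m4 s y i : y < s -> i < s -> ((y + (s - i)) %% s + i) %% s = y.
Proof.
  move=> Hy Hi. rewrite modnDml -addnA subnK; last lia.
  by rewrite modnDr modn_small.
Qed.
Lemma m3 s i : i < s -> ((s - i) %% s + i) %% s = 0.
Proof. move=> Hi. have := @m4 s 0 i. rewrite add0n. apply; lia. Qed.
Lemma m1 s i i' : i < s -> i' < s -> ((s - i') %% s + i) %% s = 0 -> i = i'.
Proof.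
  move=> Hi Hi'. rewrite modnDml.
  case: (leqP i' i) => H.
  - rewrite addnC addnBA; last lia. rewrite addnC -addnBA // modnDl modn_small; lia.
  - rewrite modn_small; lia.
Qed.

Section Count.
Variables (n a s : nat).
Hypotheses (Ha : 0 < a) (Hs : 0 < s) (Has : a + s <= n.+1).

Definition rotv (j y : 'I_n.+1) : 'I_n.+1 := inord ((y + j) %% n.+1).
Definition rotp (i : nat) (x : 'I_n.+1) : 'I_n.+1 :=
  if (a <= x < a + s) then inord (a + (x - a + i) %% s) else x.

Lemma rotv_val j y : nat_of_ord (rotv j y) = (y + j) %% n.+1.
Proof. by rewrite /rotv inordK // ltn_pmod. Qed.

Lemma rotp_val i x : nat_of_ord (rotp i x) = if (a <= x < a + s) then a + (x - a + i) %% s else x.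
Proof.
  rewrite /rotp. case: ifP => // _. rewrite inordK //.
  have := ltn_pmod (x - a + i) Hs. lia.
Qed.

Lemma rotv_inj j : injective (rotv j).
Proof.
  move=> y y' /(congr1 (@nat_of_ord _)). rewrite !rotv_val => H. apply: ord_inj.
  exact: (m2 (ltn_ord y) (ltn_ord y') H).
Qed.

Lemma rotp_inj i : injective (rotp i).
Proof.
  move=> x x' /(congr1 (@nat_of_ord _)). rewrite !rotp_val => H. apply: ord_inj => /=.
  move: H. case: ifP => H1; case: ifP => H2.
  - move=> H. have : (x - a + i) %% s = (x' - a + i) %% s by lia.
    move=> /m2 E. have := E ltac:(lia) ltac:(lia). lia.
  - have := ltn_pmod (x - a + i) Hs. lia.
  - have := ltn_pmod (x' - a + i) Hs. lia.
  - done.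
Qed.

Lemma rotp_range i (x : 'I_n.+1) : a <= x < a + s -> a <= rotp i x < a + s.
Proof. move=> H. rewrite rotp_val H. have := ltn_pmod (x - a + i) Hs. lia. Qed.

Definition Phi (p : {ffun 'I_n.+1 -> 'I_n.+1} * ('I_n.+1 * 'I_s)) : {ffun 'I_n.+1 -> 'I_n.+1} :=
  [ffun x => rotv p.2.1 (p.1 (rotp p.2.2 x))].

Lemma root0 (f : {ffun 'I_n.+1 -> 'I_n.+1}) : injective f -> (forall j : 'I_n.+1, 0 < j -> f ord0 < f j) ->
  f ord0 = ord0.
Proof.
  move=> Hi H. have [g fK gK] := injF_bij Hi.
  case: (posnP (g ord0)) => Hg.
  - have : g ord0 = ord0 by apply: ord_inj.
    move=> E. by rewrite -E gK.
  - have := H _ Hg. by rewrite gK.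
Qed.

Lemma count_bound (A : pred {ffun 'I_n.+1 -> 'I_n.+1}) :
  (forall f, A f -> injective f) ->
  (forall f, A f -> forall j : 'I_n.+1, 0 < j -> f ord0 < f j) ->
  (forall f, A f -> forall j : 'I_n.+1, a < j < a + s -> f (inord a) < f j) ->
  #|A| * (n.+1 * s) <= n.+1`!.
Proof.
  move=> HAi HA0 HA1.
  set S := setX [set f | A f] [set: 'I_n.+1 * 'I_s].
  have HS : #|S| = #|A| * (n.+1 * s).
  { rewrite cardsX cardsT card_prod !card_ord. congr (_ * _). by apply: eq_card => f; rewrite inE. }
  rewrite -HS -ffactnn.
  have -> : n.+1 ^_ n.+1 = #|[set f : {ffun 'I_n.+1 -> 'I_n.+1} | injectiveb f]|
    by rewrite card_inj_ffuns card_ord.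
  rewrite -(card_in_imset (f:=Phi)).
  { apply: subset_leq_card. apply/subsetP => g /imsetP [p Hp ->]. case: p Hp => f [j i] Hp.
    rewrite inE. move: Hp. rewrite inE /= inE => /andP [Af _].
    apply/injectiveP => x y. rewrite !ffunE /= => /rotv_inj /(HAi _ Af) /rotp_inj. done. }
  move=> [f [j i]] [f' [j' i']]. rewrite /S !inE /= => /andP [Af _] /andP [Af' _] E.
  have H x : rotv j (f (rotp i x)) = rotv j' (f' (rotp i' x)).
  { have := congr1 (fun g : {ffun 'I_n.+1 -> 'I_n.+1} => g x) E. by rewrite /Phi !ffunE /=. }
  have rp0 : forall i0, rotp i0 ord0 = ord0.
  { move=> i0. apply: ord_inj. rewrite rotp_val /=. case: ifP => //. lia. }
  have Ejj : j = j'.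
  { have := H ord0. rewrite !rp0 (root0 (HAi _ Af) (HA0 _ Af)) (root0 (HAi _ Af') (HA0 _ Af')).
    move/(congr1 (@nat_of_ord _)). rewrite !rotv_val /= !add0n !modn_small //. by move/val_inj. }
  subst j'.
  have H' x : f (rotp i x) = f' (rotp i' x) by apply: (rotv_inj (H x)).
  set al : 'I_n.+1 := inord a.
  have alv : nat_of_ord al = a by rewrite inordK //; lia.
  have Hlt : forall (g : {ffun 'I_n.+1 -> 'I_n.+1}), A g -> forall y : 'I_n.+1, a <= y < a + s -> g al <= g y.
  { move=> g Ag y Hy. case: (eqVneq y al) => [->//|Hne].
    apply: ltnW. apply: HA1 => //. have : nat_of_ord y <> a.
    { move=> E0. have E1 : y = al by apply: ord_inj; rewrite alv. by rewrite E1 eqxx in Hne. }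
    lia. }
  set x1 : 'I_n.+1 := inord (a + (s - i) %% s).
  set x2 : 'I_n.+1 := inord (a + (s - i') %% s).
  have x1v : nat_of_ord x1 = a + (s - i) %% s by rewrite inordK //; have := ltn_pmod (s - i) Hs; lia.
  have x2v : nat_of_ord x2 = a + (s - i') %% s by rewrite inordK //; have := ltn_pmod (s - i') Hs; lia.
  have x1r : a <= x1 < a + s by rewrite x1v; have := ltn_pmod (s - i) Hs; lia.
  have x2r : a <= x2 < a + s by rewrite x2v; have := ltn_pmod (s - i') Hs; lia.
  have r1 : rotp i x1 = al.
  { apply: ord_inj. rewrite rotp_val x1r alv x1v. rewrite (_ : a + (s - i) %% s - a = (s - i) %% s); last lia.
    rewrite m3 ?addn0 //. }
  have r2 : rotp i' x2 = al.
  { apply: ord_inj. rewrite rotp_val x2r alv x2v. rewrite (_ : a + (s - i') %% s - a = (s - i') %% s); last lia.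
    rewrite m3 ?addn0 //. }
  have L1 : f' al <= f al.
  { rewrite -{2}r1 H'. apply: Hlt => //. exact: rotp_range. }
  have L2 : f al <= f (rotp i x2).
  { apply: Hlt => //. exact: rotp_range. }
  have L3 : f (rotp i x2) = f' al by rewrite H' r2.
  have E2 : rotp i x2 = al.
  { apply: (HAi _ Af). apply: ord_inj. move: L1 L2 L3. move=> L1 L2 L3. apply/eqP. rewrite eqn_leq. apply/andP; split.
    - rewrite L3. done.
    - done. }
  have Eii : i = i'.
  { apply: ord_inj. move/(congr1 (@nat_of_ord _)): E2. rewrite rotp_val x2r alv x2v.
    rewrite (_ : a + (s - i') %% s - a = (s - i') %% s); last lia.
    move=> E3. apply: (m1 (ltn_ord i) (ltn_ord i')). lia. }
  subst i'.
  have Eff : f = f'.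
  { have [g gK Kg] := injF_bij (@rotp_inj i).
    apply/ffunP => x. by rewrite -(Kg x) H'. }
  by rewrite Eff.
Qed.

End Count.

Lemma fact_fac n : Factorial.fact n = n`!.
Proof. elim: n => [|n IH] //=. by rewrite factS IH. Qed.

Lemma nl_bound t : 2 <= bsize t ->
  exists s, bsize t <= 2 * s + 1 /\ nlabelings t * (bsize t * s) <= Factorial.fact (bsize t).
Proof.
  case: t => [|l r] //= Hk. rewrite fact_fac.
  set n := bsize l + bsize r.
  have Edge : forall f : {ffun 'I_n.+1 -> 'I_n.+1}, increasing_labeling (t := Node l r) f ->
      forall i j, (i, j) \in parent_edges 0 (Node l r) -> f (inord i) < f (inord j).
  { move=> f /andP [_ /forallP Hf] i j Hij. have [Hi Hj] := edges_range Hij. rewrite /= -/n in Hi Hj.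
    have := Hf (inord i) => /forallP /(_ (inord j)). have Hi2 : i < n.+1 by lia. have Hj2 : j < n.+1 by lia. rewrite !inordK //.
    by move/implyP; apply. }
  have Sub : forall o t' i j, (i, j) \in parent_edges o t' -> (o = 1 /\ t' = l) \/ (o = 1 + bsize l /\ t' = r) ->
      (i, j) \in parent_edges 0 (Node l r).
  { move=> o t' i j H [[Eo Et]|[Eo Et]]; subst o t'; rewrite /= !mem_cat H ?orbT //. }
  have key : forall a s, 0 < a -> 0 < s -> a + s <= n.+1 ->
     (forall f : {ffun 'I_n.+1 -> 'I_n.+1}, increasing_labeling (t := Node l r) f ->
        forall j : 'I_n.+1, a < j < a + s -> f (inord a) < f j) ->
     nlabelings (Node l r) * (n.+1 * s) <= n.+1`!.
  { move=> a s Ha Hs Has H1.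
    apply: (@count_bound n a s Ha Hs Has [pred f | increasing_labeling (t := Node l r) f]).
    - move=> f /andP [/injectiveP Hi _]. exact: Hi.
    - move=> f Hf j Hj.
      have := desc_min (F := fun m => nat_of_ord (f (inord m))) (Edge f Hf) (j := j).
      rewrite inord_val (_ : inord 0 = ord0); last by apply: ord_inj; rewrite inordK.
      apply. rewrite /=. have := ltn_ord j. lia.
    - exact: H1. }
  case: (leqP (bsize r) (bsize l)) => Hlr.
  - exists (bsize l). split; first lia.
    apply: (key 1 (bsize l)); try lia.
    move=> f Hf j Hj.
    have := desc_min (F := fun m => nat_of_ord (f (inord m))) (t := l) (o := 1) _ (j := j).
    rewrite inord_val. apply; last lia.
    move=> i j' H. apply: Edge => //. apply: Sub H _. by left.
  - exists (bsize r). split; first lia.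
    apply: (key (1 + bsize l) (bsize r)); try lia.
    move=> f Hf j Hj.
    have := desc_min (F := fun m => nat_of_ord (f (inord m))) (t := r) (o := 1 + bsize l) _ (j := j).
    rewrite inord_val. apply; last lia.
    move=> i j' H. apply: Edge => //. apply: Sub H _. by right.
Qed.

Lemma nl_bound_P t : Nat.le 2 (bsize t) ->
  exists s, Nat.le (bsize t) (Nat.add (Nat.mul 2 s) 1) /\
            Nat.le (Nat.mul (nlabelings t) (Nat.mul (bsize t) s)) (Factorial.fact (bsize t)).
Proof.
  move/leP => H. have [s [H1 H2]] := nl_bound H. exists s. split; apply/leP => //.
Qed.
End Comb.

From Stdlib Require Import Lra Lia.
From Corelib Require Import ssreflect ssrbool.
Open Scope R_scope.

Definition D (p : R -> C) (s : R) (l : C) :=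
  is_derive (fun t => Re (p t)) s (Re l) /\ is_derive (fun t => Im (p t)) s (Im l).

Lemma Cmod_le_re_im (x : C) : Cmod x <= 2 * Rmax (Rabs (Re x)) (Rabs (Im x)).
Proof.
  eapply Rle_trans; [apply Cmod_2Rmax|].
  apply Rmult_le_compat_r.
  - eapply Rle_trans; [apply Rabs_pos| apply Rmax_l].
  - have h2 := sqrt_sqrt 2 ltac:(lra). have h3 := sqrt_pos 2. nra.
Qed.

Lemma re_le (x : C) : Rabs (Re x) <= Cmod x.
Proof. apply re_le_Cmod. Qed.
Lemma im_le (x : C) : Rabs (Im x) <= Cmod x.
Proof. eapply Rle_trans; [|apply (Rmax_Cmod x)]. apply Rmax_r. Qed.

Lemma D_ray (f : C -> C) (l a d : C) (s : R) :
  is_derive f (a + s * d)%C l -> D (fun t => f (a + t * d)%C) s (d * l)%C.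
Proof.
  intros [_ Hf].
  assert (Hw := Hf (a + s*d)%C (fun P H => H)). clear Hf.
  assert (key : forall eps, 0 < eps -> exists delta : posreal, forall h, h <> 0 -> Rabs h < delta ->
     Cmod (f (a + RtoC (s + h) * d)%C - f (a + s*d)%C - (h * (d * l)))%C < eps * Rabs h).
  { intros eps Heps.
    have Hd : 0 < Cmod d + 1 by (have := Cmod_ge_0 d; lra).
    set e' := mkposreal (eps / (Cmod d + 1)) (Rdiv_lt_0_compat _ _ Heps Hd).
    destruct (Hw e') as [del Hdel].
    have Hdl : 0 < del / (Cmod d + 1) by apply Rdiv_lt_0_compat; [apply cond_pos|lra].
    exists (mkposreal _ Hdl). intros h Hh0 Hh. simpl in Hh.
    have Hball : @ball (AbsRing_UniformSpace C_AbsRing) (a + s*d)%C del (a + RtoC (s+h)*d)%C.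
    { change (Cmod ((a + RtoC (s + h) * d) - (a + s * d))%C < del).
      replace ((a + RtoC (s + h) * d) - (a + s * d))%C with (RtoC h * d)%C by (rewrite RtoC_plus; ring).
      rewrite Cmod_mult Cmod_R.
      apply Rle_lt_trans with (Rabs h * (Cmod d + 1)).
      { apply Rmult_le_compat_l; [apply Rabs_pos| lra]. }
      apply (Rmult_lt_compat_r (Cmod d + 1)) in Hh; [|lra].
      field_simplify in Hh; lra. }
    have := Hdel _ Hball.
    change (Cmod (f (a + RtoC (s + h) * d)%C - f (a + s * d)%C - ((a + RtoC (s + h) * d) - (a + s * d)) * l)%C
       <= e' * Cmod ((a + RtoC (s + h) * d) - (a + s * d))%C -> Cmod (f (a + RtoC (s + h) * d)%C - f (a + s * d)%C - h * (d * l))%C < eps * Rabs h).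
    replace ((a + RtoC (s + h) * d) - (a + s * d))%C with (RtoC h * d)%C by (rewrite RtoC_plus; ring).
    rewrite Cmod_mult Cmod_R /= => H1.
    replace (h * (d * l))%C with (RtoC h * d * l)%C by ring.
    eapply Rle_lt_trans; [apply H1|].
    have Hhp : 0 < Rabs h by apply Rabs_pos_lt.
    have Hcd := Cmod_ge_0 d.
    apply Rlt_le_trans with (eps / (Cmod d + 1) * (Rabs h * (Cmod d + 1))).
    { apply Rmult_lt_compat_l. apply Rdiv_lt_0_compat; lra.
      apply Rmult_lt_compat_l; lra. }
    right. field. lra. }
  split; apply is_derive_Reals; intros eps Heps; destruct (key eps Heps) as [del Hdel];
    exists del; intros h Hh0 Hh; specialize (Hdel h Hh0 Hh).
  - have Hhp : 0 < Rabs h by apply Rabs_pos_lt.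
    move: Hdel. generalize (f (a + RtoC (s + h) * d)%C) (f (a + s * d)%C) (d * l)%C.
    intros [x1 x2] [y1 y2] [w1 w2] Hdel.
    have := re_le ((x1, x2) - (y1, y2) - h * (w1, w2))%C.
    rewrite /Re /=. intros H2.
    replace ((x1 - y1) / h - w1) with ((x1 + - y1 + - (h * w1 - 0 * w2)) / h) by (field; auto).
    rewrite /Rdiv Rabs_mult Rabs_inv. apply (Rmult_lt_reg_r (Rabs h)); [lra|].
    rewrite Rmult_assoc Rinv_l; lra.
  - have Hhp : 0 < Rabs h by apply Rabs_pos_lt.
    move: Hdel. generalize (f (a + RtoC (s + h) * d)%C) (f (a + s * d)%C) (d * l)%C.
    intros [x1 x2] [y1 y2] [w1 w2] Hdel.
    have := im_le ((x1, x2) - (y1, y2) - h * (w1, w2))%C.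
    rewrite /Im /=. intros H2.
    replace ((x2 - y2) / h - w2) with ((x2 + - y2 + - (h * w2 + 0 * w1)) / h) by (field; auto).
    rewrite /Rdiv Rabs_mult Rabs_inv. apply (Rmult_lt_reg_r (Rabs h)); [lra|].
    rewrite Rmult_assoc Rinv_l; lra.
Qed.

Lemma is_derive_eq (f : R -> R) x l l' : is_derive f x l -> l = l' -> is_derive f x l'.
Proof. by move=> H <-. Qed.

Lemma D_ext p q s l : (forall t, p t = q t) -> D p s l -> D q s l.
Proof.
  move=> E [H1 H2]; split; (eapply is_derive_ext; [|eassumption]) => t /=; by rewrite E.
Qed.

Lemma D_eq p s l l' : D p s l -> l = l' -> D p s l'.
Proof. by move=> H <-. Qed.

Lemma D_mult p q s l1 l2 : D p s l1 -> D q s l2 ->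
  D (fun t => p t * q t)%C s (l1 * q s + p s * l2)%C.
Proof.
  move=> [P1 P2] [Q1 Q2]; split.
  - eapply (is_derive_ext (fun t => minus (mult (Re (p t)) (Re (q t))) (mult (Im (p t)) (Im (q t))))).
    { move=> t.
      rewrite /minus /plus /opp /mult /=. by destruct (p t), (q t). }
    eapply is_derive_eq.
    { apply: is_derive_minus; [apply: (is_derive_mult _ _ _ _ _ P1 Q1)| apply: (is_derive_mult _ _ _ _ _ P2 Q2)]; move=> *; apply Rmult_comm. }
    rewrite /minus /plus /opp /mult /=. destruct l1, l2, (p s), (q s). simpl. ring_simplify. reflexivity.
  - eapply (is_derive_ext (fun t => plus (mult (Re (p t)) (Im (q t))) (mult (Im (p t)) (Re (q t))))).
    { move=> t.
      rewrite /minus /plus /opp /mult /=. by destruct (p t), (q t). }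
    eapply is_derive_eq.
    { apply: is_derive_plus; [apply: (is_derive_mult _ _ _ _ _ P1 Q2)| apply: (is_derive_mult _ _ _ _ _ P2 Q1)]; move=> *; apply Rmult_comm. }
    rewrite /minus /plus /opp /mult /=. destruct l1, l2, (p s), (q s). simpl. ring.
Qed.

Lemma D_minus p q s l1 l2 : D p s l1 -> D q s l2 ->
  D (fun t => p t - q t)%C s (l1 - l2)%C.
Proof.
  move=> [P1 P2] [Q1 Q2]; split.
  - eapply (is_derive_ext (fun t => minus (Re (p t)) (Re (q t)))).
    { move=> t.
      rewrite /minus /plus /opp /=. by destruct (p t), (q t). }
    eapply is_derive_eq; first by apply: (is_derive_minus _ _ _ _ _ P1 Q1).
    rewrite /minus /plus /opp /=. destruct l1, l2. simpl. ring_simplify. reflexivity.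
  - eapply (is_derive_ext (fun t => minus (Im (p t)) (Im (q t)))).
    { move=> t.
      rewrite /minus /plus /opp /=. by destruct (p t), (q t). }
    eapply is_derive_eq; first by apply: (is_derive_minus _ _ _ _ _ P2 Q2).
    rewrite /minus /plus /opp /=. destruct l1, l2. simpl. ring_simplify. reflexivity.
Qed.

Lemma D_const (c : C) s : D (fun _ => c) s 0%C.
Proof. split; apply: is_derive_const. Qed.

Lemma D_lin (z : C) s : D (fun t => RtoC t * z)%C s z.
Proof.
  destruct z as [z1 z2]; split.
  - eapply is_derive_ext. { move=> t. rewrite /Re /=. reflexivity. }
    rewrite /Re /=. auto_derive => //. ring.
  - eapply is_derive_ext. { move=> t. rewrite /Im /=. reflexivity. }
    rewrite /Im /=. auto_derive => //. ring.
Qed.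

Definition cexp (w : C) : C := (exp (Re w) * cos (Im w), exp (Re w) * sin (Im w)).

Lemma D_cexp a d s : D (fun t => cexp (a + RtoC t * d))%C s (d * cexp (a + RtoC s * d))%C.
Proof.
  destruct a as [a1 a2], d as [d1 d2]; split.
  - eapply is_derive_ext. { move=> t. rewrite /cexp /Re /Im /=. reflexivity. }
    rewrite /cexp /Re /Im /=. auto_derive => //. rewrite /Rminus. ring.
  - eapply is_derive_ext. { move=> t. rewrite /cexp /Re /Im /=. reflexivity. }
    rewrite /cexp /Re /Im /=. auto_derive => //. rewrite /Rminus. ring.
Qed.

Lemma cexp0 : cexp 0%C = 1%C.
Proof. rewrite /cexp /Re /Im /= exp_0 cos_0 sin_0 /RtoC. f_equal; ring. Qed.

Lemma der_cont f x l : is_derive f x l -> continuity_pt f x.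
Proof. move=> H. apply continuity_pt_filterlim. apply: ex_derive_continuous. by exists l. Qed.

Lemma D_cont p s l : D p s l -> continuity_pt (fun t => Cmod (p t)) s.
Proof.
  move=> [H1 H2].
  have c1 := der_cont _ _ _ H1. have c2 := der_cont _ _ _ H2.
  change (continuity_pt (comp sqrt (fun t => (Re (p t))^2 + (Im (p t))^2)) s).
  apply continuity_pt_comp.
  - apply continuity_pt_plus; apply continuity_pt_mult => //; apply continuity_pt_mult => //;
    apply continuity_pt_const => ? ? //.
  - apply continuity_pt_sqrt. have := pow2_ge_0 (Re (p s)). have := pow2_ge_0 (Im (p s)). lra.
Qed.

Lemma MVR (f f' b b' : R -> R) s0 : 0 <= s0 ->
  (forall s, is_derive f s (f' s)) -> (forall s, is_derive b s (b' s)) ->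
  (forall s, 0 <= s <= s0 -> Rabs (f' s) <= b' s) -> Rabs (f s0 - f 0) <= b s0 - b 0.
Proof.
  move=> Hs0 Hf Hb Hbd.
  have M1 := MVT_gen (fun t => f t - b t) 0 s0 (fun t => f' t - b' t).
  have M2 := MVT_gen (fun t => - f t - b t) 0 s0 (fun t => - f' t - b' t).
  rewrite Rmin_left ?Rmax_right in M1 M2 => //.
  case: M1.
  { move=> x _. apply: is_derive_minus; [apply Hf|apply Hb]. }
  { move=> x _. apply continuity_pt_minus; apply: der_cont; [apply Hf|apply Hb]. }
  move=> c1 [Hc1 E1].
  case: M2.
  { move=> x _. apply: is_derive_minus; [apply: is_derive_opp; apply Hf|apply Hb]. }
  { move=> x _. apply continuity_pt_minus; [apply continuity_pt_opp|]; apply: der_cont; [apply Hf|apply Hb]. }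
  move=> c2 [Hc2 E2].
  have B1 := Hbd _ Hc1. have B2 := Hbd _ Hc2.
  have A1 : f' c1 - b' c1 <= 0 by (have := Rle_abs (f' c1); lra).
  have A2 : - f' c2 - b' c2 <= 0 by (have := Rabs_Ropp (f' c2); have := Rle_abs (- f' c2); lra).
  have X1 : (f' c1 - b' c1) * (s0 - 0) <= 0 by apply Rmult_le_0_r; lra.
  have X2 : (- f' c2 - b' c2) * (s0 - 0) <= 0 by apply Rmult_le_0_r; lra.
  apply Rabs_le; lra.
Qed.

Lemma MVI (p p' : R -> C) (b b' : R -> R) s0 : 0 <= s0 ->
  (forall s, D p s (p' s)) -> (forall s, is_derive b s (b' s)) ->
  (forall s, 0 <= s <= s0 -> Cmod (p' s) <= b' s) ->
  Cmod (p s0 - p 0)%C <= 2 * (b s0 - b 0).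
Proof.
  move=> Hs0 Hp Hb Hbd.
  have R1 : Rabs (Re (p s0) - Re (p 0)) <= b s0 - b 0.
  { apply: (MVR (fun t => Re (p t)) (fun t => Re (p' t))) => //.
    - move=> s; exact: (proj1 (Hp s)).
    - move=> s Hs. apply: Rle_trans; [apply re_le| by apply Hbd]. }
  have R2 : Rabs (Im (p s0) - Im (p 0)) <= b s0 - b 0.
  { apply: (MVR (fun t => Im (p t)) (fun t => Im (p' t))) => //.
    - move=> s; exact: (proj2 (Hp s)).
    - move=> s Hs. apply: Rle_trans; [apply im_le| by apply Hbd]. }
  apply: Rle_trans; first by apply Cmod_le_re_im.
  apply Rmult_le_compat_l; first lra.
  by apply Rmax_lub.
Qed.

Definition gg (u : C -> C) w := (cexp (- w) * u w)%C.
Definition gg1 (u u1 : C -> C) w := (cexp (- w) * (u1 w - u w))%C.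

Lemma eq_from (A B X Y : C) : (A - B = X * Y)%C -> Y = 0%C -> A = B.
Proof. move=> H HY. apply Ceq_minus. by rewrite H HY Cmult_0_r. Qed.

Lemma Dg u u1 a d s (Hu : forall z, is_derive u z (u1 z)) :
  D (fun t => gg u (a + RtoC t * d))%C s (d * gg1 u u1 (a + RtoC s * d))%C.
Proof.
  apply: (D_ext (fun t => cexp (-a + RtoC t * (-d)) * u (a + RtoC t * d))%C).
  { move=> t. rewrite /gg. have ->: (- (a + RtoC t * d) = -a + RtoC t * (-d))%C by ring. done. }
  apply: D_eq; first exact: (D_mult _ _ _ _ _ (D_cexp (-a) (-d) s) (D_ray u _ a d s (Hu _))).
  rewrite /gg1. have ->: (- (a + RtoC s * d) = -a + RtoC s * (-d))%C by ring. ring.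
Qed.

Lemma Dg1 u u1 u2 (c : R) k a d s (Hu : forall z, is_derive u z (u1 z))
  (Hu1 : forall z, is_derive u1 z (u2 z))
  (HO : forall z : C, Cplus (Cminus (u2 z) (Cmult (RtoC 2) (u1 z)))
              (Cmult (Cminus (RtoC 1) (Cmult (RtoC c) (pow_n z (k - 1)%nat))) (u z)) = RtoC 0) :
  D (fun t => gg1 u u1 (a + RtoC t * d))%C s
    (d * (RtoC c * @pow_n C_Ring (a + RtoC s * d)%C (k - 1)%nat * gg u (a + RtoC s * d)))%C.
Proof.
  apply: (D_ext (fun t => cexp (-a + RtoC t * (-d)) * (u1 (a + RtoC t * d) - u (a + RtoC t * d)))%C).
  { move=> t. rewrite /gg1. have ->: (- (a + RtoC t * d) = -a + RtoC t * (-d))%C by ring. done. }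
  apply: D_eq; first exact: (D_mult _ _ _ _ _ (D_cexp (-a) (-d) s)
      (D_minus _ _ _ _ _ (D_ray u1 _ a d s (Hu1 _)) (D_ray u _ a d s (Hu _)))).
  rewrite /gg. have ->: (- (a + RtoC s * d) = -a + RtoC s * (-d))%C by ring.
  apply: eq_from; last exact: (HO (a + RtoC s * d)%C).
  have h2 : RtoC 2 = (RtoC 1 + RtoC 1)%C by rewrite -RtoC_plus; f_equal; ring.
  rewrite h2 /Cminus. instantiate (1 := (d * cexp (- a + RtoC s * - d))%C). ring.
Qed.

Lemma Cmod_pow_n (x : C) n : Cmod (@pow_n C_Ring x n) = Cmod x ^ n.
Proof.
  elim: n => [|n IH] /=; first exact: Cmod_1.
  change (Cmod (x * @pow_n C_Ring x n)%C = Cmod x * Cmod x ^ n).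
  by rewrite Cmod_mult IH.
Qed.

Lemma der_pow_div A n s : (1 <= n)%nat -> is_derive (fun s => A * s^n / INR n) s (A * s^(n-1)).
Proof.
  move=> Hn. have Hn0 : INR n <> 0 by apply not_0_INR; lia.
  auto_derive => //. rewrite Nat.sub_1_r. field. done.
Qed.

Lemma C0w (w : C) : (0 + RtoC 0 * w = 0)%C.
Proof. ring. Qed.
Lemma C1w (w : C) : (0 + RtoC 1 * w = w)%C.
Proof. ring. Qed.

Lemma gg_0 u : u (RtoC 0) = RtoC (-1) -> gg u 0%C = RtoC (-1).
Proof.
  move=> H. rewrite /gg. have ->: (- RtoC 0 = RtoC 0)%C by ring. by rewrite cexp0 H Cmult_1_l.
Qed.
Lemma gg1_0 u u1 : u (RtoC 0) = RtoC (-1) -> u1 (RtoC 0) = RtoC 0 -> gg1 u u1 0%C = 1%C.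
Proof.
  move=> H H1. rewrite /gg1. have ->: (- RtoC 0 = RtoC 0)%C by ring. rewrite cexp0 H H1.
  rewrite /RtoC /Cmult /Cminus /Cplus /Copp /=; f_equal; ring.
Qed.

Lemma Cmod_sw (s : R) (w : C) : 0 <= s -> Cmod (0 + RtoC s * w)%C = s * Cmod w.
Proof. move=> Hs. rewrite Cplus_0_l Cmod_mult Cmod_R Rabs_pos_eq //. Qed.

Lemma pow_le1 x n : 0 <= x <= 1 -> x ^ n <= 1.
Proof. move=> H. rewrite -(pow1 n). by apply pow_incr. Qed.

Lemma est u u1 u2 (c : R) k r0 (w : C)
  (Hu : forall z, is_derive u z (u1 z)) (Hu1 : forall z, is_derive u1 z (u2 z))
  (HO : forall z : C, Cplus (Cminus (u2 z) (Cmult (RtoC 2) (u1 z)))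
              (Cmult (Cminus (RtoC 1) (Cmult (RtoC c) (pow_n z (k - 1)%nat))) (u z)) = RtoC 0)
  (Hu0 : u (RtoC 0) = RtoC (-1)) (Hu10 : u1 (RtoC 0) = RtoC 0)
  (Hc : 0 <= c) (Hk : (1 <= k)%nat) (Hr1 : 1 <= r0) (Hr2 : r0 <= 2) (Hw : Cmod w <= r0)
  (Heps : 4 * c * r0^(k+1) / (INR k * INR (k+1)) <= /2) :
  Cmod (gg u w - (w - 1))%C <= 24 * c * r0^(k+1) / (INR k * INR (k+1)) /\
  Cmod (gg1 u u1 w - 1)%C <= 12 * c * r0^k / INR k.
Proof.
  have Hk0 : 0 < INR k by apply lt_0_INR; lia.
  have Hk1 : 0 < INR (k+1) by apply lt_0_INR; lia.
  have Hcw := Cmod_ge_0 w.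
  set P := fun s => Cmod (gg u (0 + RtoC s * w)%C).
  have [Mx [HM HMx]] : exists Mx, (forall s, 0 <= s <= 1 -> P s <= P Mx) /\ 0 <= Mx <= 1.
  { apply continuity_ab_maj; first lra. move=> s _. exact: (D_cont _ _ _ (Dg u u1 0 w s Hu)). }
  set M := P Mx. have HM0 : 0 <= M by apply Cmod_ge_0.
  have Hr0k : forall n, 0 <= r0 ^ n by move=> n; apply pow_le; lra.
  have CA : forall s0, 0 <= s0 <= 1 ->
      Cmod (gg1 u u1 (0 + RtoC s0 * w) - 1)%C <= 2 * (c * r0^k * M * s0^k / INR k).
  { move=> s0 Hs0.
    have := MVI (fun t => gg1 u u1 (0 + RtoC t * w))%C
      (fun s => w * (RtoC c * @pow_n C_Ring (0 + RtoC s * w)%C (k-1) * gg u (0 + RtoC s * w)))%C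
      (fun s => c * r0^k * M * s^k / INR k) (fun s => c * r0^k * M * s^(k-1)) s0 (proj1 Hs0).
    rewrite C0w gg1_0 // pow_i; last lia.
    move=> H. apply: Rle_trans; first apply: H.
    - move=> s. exact: (Dg1 u u1 u2 c k 0 w s Hu Hu1 HO).
    - move=> s. exact: der_pow_div.
    - move=> s Hs.
      have HG : Cmod (gg u (0 + RtoC s * w)%C) <= M by apply: (HM s); lra.
      move: HG. set G := gg u _ => HG. clearbody G.
      rewrite !Cmod_mult Cmod_R Rabs_pos_eq // Cmod_pow_n Cmod_sw; last lra.
      have HX : (s * Cmod w)^(k-1) <= s^(k-1) * r0^(k-1).
      { rewrite -Rpow_mult_distr. apply pow_incr. split; first (apply Rmult_le_pos; lra).
        apply Rmult_le_compat_l; lra. }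
      have Hsk : 0 <= s^(k-1) by apply pow_le; lra.
      apply Rle_trans with (r0 * (c * (s^(k-1) * r0^(k-1)) * M)).
      + apply Rmult_le_compat => //.
        * apply Rmult_le_pos; [apply Rmult_le_pos => //; apply pow_le; apply Rmult_le_pos; lra| apply Cmod_ge_0].
        * apply Rmult_le_compat => //.
          -- apply Rmult_le_pos => //; apply pow_le; apply Rmult_le_pos; lra.
          -- apply Cmod_ge_0.
          -- apply Rmult_le_compat_l => //.
      + right. rewrite [in RHS](_ : k = S (k-1)); last lia. simpl. rewrite ?Nat.sub_0_r. ring.
    - right. field. lra. }
  have CB : forall s0, 0 <= s0 <= 1 ->
      Cmod (gg u (0 + RtoC s0 * w) - (RtoC s0 * w - 1))%C
        <= 4 * c * r0^(k+1) / (INR k * INR (k+1)) * M * s0^(k+1).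
  { move=> s0 Hs0.
    have := MVI (fun t => gg u (0 + RtoC t * w) - (RtoC t * w - 1))%C
      (fun s => w * gg1 u u1 (0 + RtoC s * w) - w)%C
      (fun s => 2 * c * r0^(k+1) * M / INR k * s^(k+1) / INR (k+1))
      (fun s => 2 * c * r0^(k+1) * M / INR k * s^(k+1-1)) s0 (proj1 Hs0).
    rewrite C0w gg_0 // pow_i; last lia.
    have ->: (RtoC (-1) - (RtoC 0 * w - 1) = 0)%C.
    { rewrite /RtoC /Cmult /Cminus /Cplus /Copp /=; f_equal; ring. }
    have ->: forall x : C, (x - 0 = x)%C by move=> x; ring.
    move=> H. apply: Rle_trans; first apply: H.
    - move=> s. apply: D_eq. apply: D_minus; first exact: Dg.
      apply: D_minus; [exact: D_lin | exact: D_const]. ring.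
    - move=> s. apply: der_pow_div; lia.
    - move=> s Hs.
      have ->: (w * gg1 u u1 (0 + RtoC s * w) - w = w * (gg1 u u1 (0 + RtoC s * w) - 1))%C by ring.
      rewrite Cmod_mult.
      have HA := CA s ltac:(lra).
      apply Rle_trans with (r0 * (2 * (c * r0 ^ k * M * s ^ k / INR k))).
      + apply Rmult_le_compat => //; apply Cmod_ge_0.
      + right. rewrite (_ : (k + 1 - 1 = k)%nat); last lia.
        rewrite (_ : (k + 1 = S k)%nat); last lia. simpl. field. lra.
    - right. field. lra. }
  have HM6 : M <= 6.
  { have HB := CB Mx HMx.
    have HE : 4 * c * r0^(k+1) / (INR k * INR (k+1)) * M * Mx^(k+1) <= M / 2.
    { have : Mx^(k+1) <= 1 by apply pow_le1; lra.
      have : 0 <= Mx^(k+1) by apply pow_le; lra.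
      have : 0 <= 4 * c * r0^(k+1) / (INR k * INR (k+1)).
      { apply Rmult_le_pos; [apply Rmult_le_pos; [lra|apply Hr0k]|].
        apply Rlt_le, Rinv_0_lt_compat, Rmult_lt_0_compat; lra. }
      move: Heps. set E := 4 * c * r0 ^ (k + 1) / (INR k * INR (k + 1)).
      move=> Heps HE0 HX0 HX1.
      have : E * M * Mx ^ (k + 1) <= E * M * 1 by apply Rmult_le_compat_l => //; apply Rmult_le_pos.
      have : E * M <= /2 * M by apply Rmult_le_compat_r.
      lra. }
    have HT : Cmod (RtoC Mx * w - 1)%C <= 3.
    { apply: Rle_trans; first apply Cmod_triangle.
      rewrite Cmod_opp Cmod_1 Cmod_mult Cmod_R Rabs_pos_eq; last lra.
      nra. }
    have HMT : M <= Cmod (RtoC Mx * w - 1)%C + 4 * c * r0^(k+1) / (INR k * INR (k+1)) * M * Mx^(k+1).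
    { have T := Cmod_triangle (RtoC Mx * w - 1)%C (gg u (0 + RtoC Mx * w) - (RtoC Mx * w - 1))%C.
      rewrite (_ : ((RtoC Mx * w - 1) + (gg u (0 + RtoC Mx * w) - (RtoC Mx * w - 1)) = gg u (0 + RtoC Mx*w))%C) in T; last by ring.
      have : M = Cmod (gg u (0 + RtoC Mx * w)%C) by []. lra. }
    lra. }
  split.
  - have := CB 1 ltac:(lra). rewrite C1w pow1.
    have ->: (RtoC 1 * w = w)%C by ring. move=> H. apply: Rle_trans; first apply H.
    have : 0 <= 4 * c * r0^(k+1) / (INR k * INR (k+1)).
    { apply Rmult_le_pos; [apply Rmult_le_pos; [lra|apply Hr0k]|].
      apply Rlt_le, Rinv_0_lt_compat, Rmult_lt_0_compat; lra. }
    move=> H0.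
    apply Rle_trans with (4 * c * r0 ^ (k + 1) / (INR k * INR (k + 1)) * 6); first nra.
    right. field. lra.
  - have := CA 1 ltac:(lra). rewrite C1w pow1 => H. apply: Rle_trans; first apply H.
    have : 0 <= c * r0^k / INR k.
    { apply Rmult_le_pos; [apply Rmult_le_pos; [lra|apply Hr0k]|].
      apply Rlt_le, Rinv_0_lt_compat; lra. }
    move=> H0.
    apply Rle_trans with (2 * (c * r0 ^ k / INR k * 6)).
    { apply Rmult_le_compat_l; first lra.
      rewrite (_ : c * r0 ^ k * M * 1 / INR k = c * r0 ^ k / INR k * M); last (field; lra).
      apply Rmult_le_compat_l => //. }
    right. field. lra.
Qed.

Lemma uniq_zero u u1 (z1 z2 : C) eta (Hu : forall z, is_derive u z (u1 z))
  (Hz1 : Cmod (z1 - 1)%C <= eta) (Hz2 : Cmod (z2 - 1)%C <= eta)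
  (Hg1 : forall w : C, Cmod (w - 1)%C <= eta -> Cmod (gg1 u u1 w - 1)%C <= /4)
  (G1 : gg u z1 = 0%C) (G2 : gg u z2 = 0%C) : z1 = z2.
Proof.
  set d := (z1 - z2)%C.
  have Hd0 := Cmod_ge_0 d.
  have := MVI (fun t => gg u (z2 + RtoC t * d) - RtoC t * d)%C
    (fun s => d * gg1 u u1 (z2 + RtoC s * d) - d)%C
    (fun s => Cmod d / 4 * s) (fun s => Cmod d / 4) 1 ltac:(lra).
  have ->: (z2 + RtoC 1 * d = z1)%C by rewrite /d; ring.
  have ->: (z2 + RtoC 0 * d = z2)%C by ring.
  rewrite G1 G2.
  have ->: (0 - RtoC 1 * d - (0 - RtoC 0 * d) = - d)%C by ring.
  rewrite Cmod_opp => H.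
  have Hle : Cmod d <= 2 * (Cmod d / 4 * 1 - Cmod d / 4 * 0).
  { apply: H.
    - move=> s. apply: D_eq. apply: D_minus; [exact: Dg| exact: D_lin]. done.
    - move=> s. auto_derive => //. ring.
    - move=> s Hs.
      have ->: (d * gg1 u u1 (z2 + RtoC s * d) - d = d * (gg1 u u1 (z2 + RtoC s * d) - 1))%C by ring.
      rewrite Cmod_mult.
      have : Cmod (gg1 u u1 (z2 + RtoC s * d) - 1)%C <= /4.
      { apply Hg1.
        have ->: (z2 + RtoC s * d - 1 = RtoC (1 - s) * (z2 - 1) + RtoC s * (z1 - 1))%C.
        { rewrite /d RtoC_minus. ring. }
        apply: Rle_trans; first apply Cmod_triangle.
        rewrite !Cmod_mult !Cmod_R !Rabs_pos_eq; try lra.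
        nra. }
      move=> H4. apply Rle_trans with (Cmod d * /4); first by apply Rmult_le_compat_l.
      right. field. }
  have : Cmod d = 0 by lra.
  move/Cmod_eq_0. rewrite /d => H0.
  apply Ceq_minus. exact H0.
Qed.

Lemma exp_pow_n x n : exp x ^ n = exp (INR n * x).
Proof.
  elim: n => [|n IH]; first by rewrite /= Rmult_0_l exp_0.
  rewrite S_INR /= IH -exp_plus. f_equal. ring.
Qed.

Lemma pow_le_exp x n : 0 <= 1 + x -> (1 + x)^n <= exp (INR n * x).
Proof.
  move=> H. rewrite -exp_pow_n. apply pow_incr. split => //. apply exp_ineq1_le.
Qed.

Lemma ln_le_half k : 1 <= k -> ln k <= k / 2.
Proof.
  move=> Hk. rewrite -(ln_exp (k/2)). apply ln_le; first lra.
  have E : exp (k/2) = exp (k/4) * exp (k/4) by rewrite -exp_plus; f_equal; field.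
  have := exp_ineq1_le (k/4). move=> H. rewrite E.
  have : (1 + k/4) * (1 + k/4) <= exp (k/4) * exp (k/4) by apply Rmult_le_compat; lra.
  have := pow2_ge_0 (1 - k/4). nra.
Qed.

Lemma asym (d : R) (k : nat) (c : R) : 0 < d <= 1 -> (20 <= k)%nat -> 192 <= exp (d * ln (INR k)) ->
  0 <= c <= 2 / (INR k - 1) ->
  let R' := 1 + (2 - d) * ln (INR k) / INR k in
  let eta := 24 * c * R'^(k+1) / (INR k * INR (k+1)) in
  1 <= R' <= 2 /\ 4 * c * R'^(k+1) / (INR k * INR (k+1)) <= /2 /\
  0 <= eta /\ 1 + eta <= 2 /\ 4 * c * (1+eta)^(k+1) / (INR k * INR (k+1)) <= /2 /\
  12 * c * (1+eta)^k / INR k <= /4.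
Proof.
  move=> Hd Hk HP Hc R' eta.
  have Hk20 : 20 <= INR k by (replace 20 with (INR 20) by (simpl; ring)); apply le_INR.
  have Hk1 : INR (k+1) = INR k + 1 by rewrite plus_INR.
  set P := exp (d * ln (INR k)) in HP.
  have Hln0 : 0 <= ln (INR k) by rewrite -ln_1; apply ln_le; lra.
  have Hlnk := ln_le_half (INR k) ltac:(lra).
  have HR1 : 1 <= R'.
  { rewrite /R'. have : 0 <= (2 - d) * ln (INR k) / INR k.
    { apply Rmult_le_pos; [apply Rmult_le_pos; lra| apply Rlt_le, Rinv_0_lt_compat; lra]. }
    lra. }
  have HR2 : R' <= 2.
  { rewrite /R'. have : (2 - d) * ln (INR k) / INR k <= 1.
    { apply Rmult_le_reg_r with (INR k); first lra.
      rewrite /Rdiv Rmult_assoc Rinv_l; last lra. nra. }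
    lra. }
  have HRk : R'^k <= INR k ^ 2 / P.
  { apply: Rle_trans; first apply pow_le_exp; first (rewrite /R' in HR1; lra).
    have -> : INR k * ((2 - d) * ln (INR k) / INR k) = 2 * ln (INR k) - d * ln (INR k) by field; lra.
    have E2 : exp (2 * ln (INR k)) = INR k ^ 2.
    { rewrite (_ : 2 * ln (INR k) = ln (INR k) + ln (INR k)); last ring. rewrite exp_plus exp_ln; [ring|lra]. }
    rewrite /Rminus exp_plus exp_Ropp E2 /P. right. reflexivity. }
  have HP0 : 0 < P by lra.
  have HRk1 : R'^(k+1) <= 2 * (INR k ^ 2 / P).
  { rewrite pow_add /= Rmult_1_r. have : 0 <= R'^k by apply pow_le; lra. nra. }
  have Hc2 : c <= 2 / 19.
  { apply: Rle_trans; first apply Hc. apply Rmult_le_reg_r with (INR k - 1); first lra.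
    rewrite /Rdiv Rmult_assoc Rinv_l; lra. }
  have HcR : c * R'^(k+1) <= 4 * INR k ^ 2 / ((INR k - 1) * P).
  { apply: Rle_trans. { apply Rmult_le_compat; try lra; [apply pow_le; lra| apply Hc| apply HRk1]. }
    right. field. lra. }
  have HkK : 0 < INR k * INR (k+1) by rewrite Hk1; nra.
  have Heta : eta <= / (INR k + 1).
  { rewrite /eta. apply Rmult_le_reg_r with (INR k * INR (k+1)); first lra.
    rewrite /Rdiv Rmult_assoc Rinv_l; last lra.
    apply Rle_trans with (24 * (4 * INR k ^ 2 / ((INR k - 1) * P))); first lra.
    rewrite Hk1. apply Rmult_le_reg_r with ((INR k - 1) * P); first nra.
    field_simplify; try lra.
    have : 0 <= (P - 192) * (INR k ^ 2 - INR k) by apply Rmult_le_pos; nra. nra. }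
  have Heta0 : 0 <= eta.
  { rewrite /eta. apply Rmult_le_pos; [apply Rmult_le_pos; [lra| apply pow_le; lra]|].
    apply Rlt_le, Rinv_0_lt_compat; lra. }
  have Hek : eta * INR (k+1) <= 1.
  { rewrite Hk1. apply Rmult_le_reg_r with (/ (INR k + 1)). apply Rinv_0_lt_compat; lra.
    rewrite Rmult_assoc Rinv_r; lra. }
  have He3 : (1 + eta)^(k+1) <= 3.
  { apply: Rle_trans; first apply pow_le_exp; first lra.
    apply: Rle_trans; last apply exp_le_3.
    rewrite Rmult_comm. case: (Rle_lt_or_eq_dec _ _ Hek) => [Hl|He].
    - left. by apply exp_increasing.
    - right. by rewrite He. }
  have He3' : (1 + eta)^k <= 3.
  { apply: Rle_trans; last apply He3. rewrite pow_add /= Rmult_1_r.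
    have : 0 <= (1 + eta)^k by apply pow_le; lra. nra. }
  split; [lra|]. split.
  { apply Rmult_le_reg_r with (INR k * INR (k+1)); first lra.
    rewrite /Rdiv Rmult_assoc Rinv_l; last lra.
    apply Rle_trans with (4 * (4 * INR k ^ 2 / ((INR k - 1) * P))); first lra.
    rewrite Hk1. apply Rmult_le_reg_r with ((INR k - 1) * P); first nra.
    field_simplify; try lra.
    have : 0 <= (P - 192) * (INR k ^ 2 - INR k) by apply Rmult_le_pos; nra. nra. }
  split => //. split.
  { have : / (INR k + 1) <= 1 by apply Rle_trans with (/1); [apply Rinv_le_contravar|]; lra. lra. }
  split.
  { apply Rmult_le_reg_r with (INR k * INR (k+1)); first lra.
    rewrite /Rdiv Rmult_assoc Rinv_l; last lra.
    have : 0 <= (1 + eta)^(k+1) by apply pow_le; lra.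
    rewrite Hk1. nra. }
  apply Rmult_le_reg_r with (INR k); first lra.
  rewrite /Rdiv Rmult_assoc Rinv_l; last lra.
  have : 0 <= (1 + eta)^k by apply pow_le; lra.
  nra.
Qed.

Unset Implicit Arguments.

Theorem lemma3p4 :
  forall delta : R, 0 < delta ->
  exists K : nat, forall t : btree, (K <= bsize t)%nat ->
  let k := bsize t in
  (* w(t) = l(t)/k! *)
  let w := INR (nlabelings t) / INR (fact k) in
  forall u u1 u2 : C -> C,
    (* u is entire with u' = u1, u'' = u2 (complex derivatives) *)
    (forall z : C, is_derive u z (u1 z)) ->
    (forall z : C, is_derive u1 z (u2 z)) ->
    (* u'' - 2u' + (1 - w(t) k z^(k-1)) u = 0, u(0) = -1, u'(0) = 0 *)
    (forall z : C,
        Cplus (Cminus (u2 z) (Cmult (RtoC 2) (u1 z)))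
              (Cmult (Cminus (RtoC 1) (Cmult (RtoC (w * INR k)) (pow_n z (k - 1)%nat))) (u z))
        = RtoC 0) ->
    u (RtoC 0) = RtoC (-1) ->
    u1 (RtoC 0) = RtoC 0 ->
    (* rho~ = smallest positive zero of u *)
    forall rho : R, 0 < rho -> u (RtoC rho) = RtoC 0 ->
    (forall x : R, 0 < x < rho -> u (RtoC x) <> RtoC 0) ->
    (* S_t = -u'/u has no singularity, i.e. u has no zero, in the annulus *)
    forall z : C,
      rho < Cmod z < 1 + (2 - delta) * ln (INR k) / INR k ->
      u z <> RtoC 0.
Proof.
  move=> delta Hdelta.
  set d := Rmin delta 1.
  have Hd : 0 < d <= 1 by rewrite /d; split; [apply Rmin_glb_lt; lra| apply Rmin_r].
  have Hdd : d <= delta by apply Rmin_l.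
  case: (nfloor_ex (exp (ln 192 / d)) (Rlt_le _ _ (exp_pos _))) => N [_ HN].
  exists (Nat.max 20 (N + 1)).
  move=> t Ht k w u u1 u2 Hu Hu1 HO Hu0 Hu10 rho Hrho Hurho _ z [Hz1 Hz2] Huz.
  have Hk20 : (20 <= k)%nat by rewrite /k; lia.
  have HkN : (N + 1 <= k)%nat by rewrite /k; lia.
  have Hk20R : 20 <= INR k by (replace 20 with (INR 20) by (simpl; ring)); apply le_INR.
  have HkNR : exp (ln 192 / d) < INR k.
  { apply: Rlt_le_trans; first apply HN. rewrite -S_INR. apply le_INR. lia. }
  have HP : 192 <= exp (d * ln (INR k)).
  { have H1 : ln 192 / d <= ln (INR k).
    { rewrite -(ln_exp (ln 192 / d)). apply ln_le; [apply exp_pos| lra]. }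
    have H2 : ln 192 <= d * ln (INR k).
    { apply Rmult_le_reg_r with (/ d); first (apply Rinv_0_lt_compat; lra).
      rewrite (Rmult_comm d) Rmult_assoc Rinv_r; lra. }
    rewrite -{1}(exp_ln 192); last lra.
    case: (Rle_lt_or_eq_dec _ _ H2) => [Hl|He]; [left; by apply exp_increasing| right; by rewrite He]. }
  have [s [Hs1 Hs2]] := @Comb.nl_bound_P t ltac:(rewrite /k in Hk20; lia).
  set c := w * INR k.
  have Hfact : 0 < INR (fact k) by apply lt_0_INR; apply lt_O_fact.
  have Hc : 0 <= c <= 2 / (INR k - 1).
  { rewrite /c /w. split.
    { apply Rmult_le_pos; [apply Rmult_le_pos; [apply pos_INR| apply Rlt_le, Rinv_0_lt_compat; lra]| apply pos_INR]. }
    have E1 : INR (nlabelings t) * INR k * INR s <= INR (fact k).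
    { rewrite -!mult_INR -Nat.mul_assoc. by apply le_INR. }
    have E2 : INR k <= 2 * INR s + 1.
    { replace (2 * INR s + 1) with (INR (2 * s + 1)) by (rewrite plus_INR mult_INR /=; ring).
      by apply le_INR. }
    have Hs0 : 0 < INR s by lra.
    have Hn0 := pos_INR (nlabelings t).
    apply Rmult_le_reg_r with (INR (fact k) * (INR k - 1)); first nra.
    field_simplify; try lra.
    have : INR (nlabelings t) * INR k * (INR k - 1) <= INR (nlabelings t) * INR k * (2 * INR s).
    { apply Rmult_le_compat_l; [apply Rmult_le_pos; lra| lra]. }
    nra. }
  have Hk1 : (1 <= k)%nat by lia.
  have [[HR1 HR2] [Heps [Heta0 [Heta2 [Heps2 Hg1b]]]]] := asym d k c Hd Hk20 HP Hc.
  set R' := 1 + (2 - d) * ln (INR k) / INR k in HR1 HR2 Heps.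
  set eta := 24 * c * R'^(k+1) / (INR k * INR (k+1)) in Heta0 Heta2 Heps2 Hg1b.
  have Hln0 : 0 <= ln (INR k) by rewrite -ln_1; apply ln_le; lra.
  have HRR : 1 + (2 - delta) * ln (INR k) / INR k <= R'.
  { rewrite /R'. apply Rplus_le_compat_l. apply Rmult_le_compat_r; first (apply Rlt_le, Rinv_0_lt_compat; lra).
    apply Rmult_le_compat_r; lra. }
  have Hgz : forall y : C, u y = RtoC 0 -> Cmod y <= R' -> Cmod (y - 1)%C <= eta.
  { move=> y Hy HyR.
    have [H1 _] := est u u1 u2 c k R' y Hu Hu1 HO Hu0 Hu10 (proj1 Hc) Hk1 HR1 HR2 HyR Heps.
    move: H1. rewrite /gg Hy Cmult_0_r.
    have ->: (RtoC 0 - (y - 1) = - (y - 1))%C by ring. by rewrite Cmod_opp. }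
  have Hz : Cmod (z - 1)%C <= eta by apply: Hgz => //; lra.
  have Hr : Cmod (RtoC rho - 1)%C <= eta.
  { apply: Hgz => //. rewrite Cmod_R Rabs_pos_eq; lra. }
  have Hg1 : forall y : C, Cmod (y - 1)%C <= eta -> Cmod (gg1 u u1 y - 1)%C <= /4.
  { move=> y Hy.
    have Hy' : Cmod y <= 1 + eta.
    { have := Cmod_triangle (y - 1)%C 1%C. rewrite Cmod_1.
      have ->: (y - 1 + 1 = y)%C by ring. lra. }
    have [_ H2] := est u u1 u2 c k (1 + eta) y Hu Hu1 HO Hu0 Hu10 (proj1 Hc) Hk1 ltac:(lra) Heta2 Hy' Heps2.
    lra. }
  have E := uniq_zero u u1 z (RtoC rho) eta Hu Hz Hr Hg1
    ltac:(by rewrite /gg Huz Cmult_0_r) ltac:(by rewrite /gg Hurho Cmult_0_r).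
  move: Hz1. rewrite E Cmod_R Rabs_pos_eq; lra.
Qed.
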